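(* For any $\lambda>0$ and any configuration $\eta$, $$\mathrm{w}^*_n = 2\sup\{\varepsilon\ge0:\ \mathcal V^{(1+\varepsilon)}\in\mathrm{cross}^*(n)\}$$ and $$\mathrm{w}_n\ \ge\ 2\sqrt{1-\inf\{r\le 1:\ \mathcal O^{(r)}\in \mathrm{cross}(n+\sqrt{1-r^2},\,n-1)\}^2},$$ where the supremum is taken to be $0$ and the infimum to be $1$ when the respective set is empty.
   Context: $\eta$ is a (locally finite) point configuration in $\mathbb R^2$ (a Poisson process of intensity $\lambda\cdot\mathrm{Leb}$ under $\mathbb P_\lambda$). For $r\ge0$, $\mathcal O^{(r)}=\bigcup_{x\in\mathrm{supp}(\eta)}B(x,r)$ and $\mathcal V^{(r)}=\mathbb R^2\setminus\mathcal O^{(r)}$; $\mathcal O=\mathcal O^{(1)}$, $\mathcal V=\mathcal V^{(1)}$. For a set $S$, ''$S\in\mathrm{cross}(a,h)$'' means $S$ contains a path inside $[-a,a]\times[-h,h]$ joining its left and right sides; $\mathrm{cross}(n)=\mathrm{cross}(n,n)$, and ''$S\in\mathrm{cross}^*(n)$'' means $S$ contains a path inside $[-n,n]^2$ joining its left and right sides. A horizontal crossing of $[-n,n]^2$ is a path in $[-n,n]^2$ joining $\{-n\}\times[-n,n]$ to $\{n\}\times[-n,n]$. $\mathrm{w}_n=2\sup_\gamma\mathrm{dist}(\gamma,\mathcal V)$ over horizontal crossings $\gamma\subset\mathcal O$ and $\mathrm{w}^*_n=2\sup_\gamma\mathrm{dist}(\gamma,\mathcal O)$ over horizontal crossings $\gamma\subset\mathcal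 V$ (each $0$ if no such crossing exists). *)

(* Defs.v *)
From HB Require Import structures.
From mathcomp Require Import all_boot all_order all_algebra.
From mathcomp Require Import all_classical all_reals all_analysis.
Set Implicit Arguments. Unset Strict Implicit. Unset Printing Implicit Defensive.
Import Order.TTheory GRing.Theory Num.Theory.
Import numFieldNormedType.Exports.
Local Open Scope classical_set_scope.
Local Open Scope ring_scope.

Section BooleanModel.
Variable R : realType.

Definition bm_edist (x y : R * R) : R :=
  Num.sqrt ((x.1 - y.1) ^+ 2 + (x.2 - y.2) ^+ 2).

Definition bm_cball (x : R * R) (r : R) : set (R * R) := [set y | bm_edist x y <= r].

(* eta is represented by its support supp(eta), a set of points of R^2 *)
Definition bm_locally_finite (eta : set (R * R)) : Prop :=
  forall r : R, finite_set [set x | eta x /\ bm_edist (0, 0) x <= r].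

Definition bm_occupied (eta : set (R * R)) (r : R) : set (R * R) :=
  \bigcup_(x in eta) bm_cball x r.
Definition bm_vacant (eta : set (R * R)) (r : R) : set (R * R) :=
  ~` bm_occupied eta r.

Definition bm_rect (a h : R) : set (R * R) :=
  [set p | (- a <= p.1 <= a) /\ (- h <= p.2 <= h)].

Definition bm_I01 : set R := [set t | 0 <= t <= 1].

Definition bm_crossing_path (a h : R) (g : R -> R * R) : Prop :=
  {within bm_I01, continuous g} /\
  (forall t, bm_I01 t -> bm_rect a h (g t)) /\
  (g 0).1 = - a /\ (g 1).1 = a.

Definition bm_cross (S : set (R * R)) (a h : R) : Prop :=
  exists g, bm_crossing_path a h g /\ (forall t, bm_I01 t -> S (g t)).

Definition bm_cross_star (S : set (R * R)) (n : R) : Prop :=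
  exists g, bm_crossing_path n n g /\ (forall t, bm_I01 t -> S (g t)).

(* dist(A,B) = inf of Euclidean distances (+oo if A or B is empty) *)
Definition bm_set_dist (A B : set (R * R)) : \bar R :=
  ereal_inf [set d | exists x y, A x /\ B y /\ d = (bm_edist x y)%:E].

Definition bm_sup0 (S : set (\bar R)) : \bar R :=
  if `[< S = set0 >] then 0%E else ereal_sup S.

Definition bm_inf1 (S : set R) : R :=
  if `[< S = set0 >] then 1 else inf S.

Definition bm_w_occ (eta : set (R * R)) (n : R) : \bar R :=
  (2%:E * bm_sup0 [set d | exists g, bm_crossing_path n n g /\
     (forall t, bm_I01 t -> bm_occupied eta 1 (g t)) /\
     d = bm_set_dist (g @` bm_I01) (bm_vacant eta 1)])%E.

Definition bm_w_vac (eta : set (R * R)) (n : R) : \bar R :=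
  (2%:E * bm_sup0 [set d | exists g, bm_crossing_path n n g /\
     (forall t, bm_I01 t -> bm_vacant eta 1 (g t)) /\
     d = bm_set_dist (g @` bm_I01) (bm_occupied eta 1)])%E.

End BooleanModel.

Arguments bm_sup0 {R} S.
Arguments bm_inf1 {R} S.
Arguments bm_set_dist {R} A B.

(* Main.v *)
Require Import Defs.
From HB Require Import structures.
From mathcomp Require Import all_boot all_order all_algebra.
From mathcomp Require Import all_classical all_reals all_analysis.
From mathcomp Require Import ring lra.
Import Order.TTheory GRing.Theory Num.Theory.
Import numFieldNormedType.Exports.
Local Open Scope classical_set_scope.
Local Open Scope ring_scope.

Section Geo.
Variable R : realType.

Definition d2 (x y : R * R) : R := (x.1 - y.1) ^+ 2 + (x.2 - y.2) ^+ 2.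

Lemma d2_ge0 (x y : R * R) : 0 <= d2 x y.
Proof. by rewrite /d2 addr_ge0 // sqr_ge0. Qed.

Lemma d2C (x y : R * R) : d2 x y = d2 y x.
Proof. by rewrite /d2; ring. Qed.

Lemma edistC (x y : R * R) : bm_edist x y = bm_edist y x.
Proof. by rewrite /bm_edist -/(d2 x y) -/(d2 y x) d2C. Qed.

Lemma edist_ge0 (x y : R * R) : 0 <= bm_edist x y.
Proof. exact: sqrtr_ge0. Qed.

Lemma edist_le (x y : R * R) (r : R) : 0 <= r -> (bm_edist x y <= r) = (d2 x y <= r ^+ 2).
Proof.
move=> r0; rewrite /bm_edist -/(d2 x y).
by rewrite -{1}(ger0_norm r0) -sqrtr_sqr ler_sqrt // sqr_ge0.
Qed.

Lemma edist_lt (x y : R * R) (r : R) : 0 <= r -> (bm_edist x y < r) = (d2 x y < r ^+ 2).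
Proof.
move=> r0; rewrite /bm_edist -/(d2 x y).
have [->|rp] := eqVneq r 0.
  by rewrite expr0n /= !ltNge sqrtr_ge0 d2_ge0.
have r0' : 0 < r by rewrite lt_def rp.
by rewrite -{1}(ger0_norm r0) -sqrtr_sqr ltr_sqrt // exprn_gt0.
Qed.

Lemma edist_sqr (x y : R * R) : bm_edist x y ^+ 2 = d2 x y.
Proof. by rewrite sqr_sqrtr // d2_ge0. Qed.

Lemma edist_triangle (x y z : R * R) : bm_edist x z <= bm_edist x y + bm_edist y z.
Proof.
have A0 := edist_ge0 x y; have B0 := edist_ge0 y z.
rewrite edist_le ?addr_ge0 //.
have HA := edist_sqr x y; have HB := edist_sqr y z.
set A := bm_edist x y in A0 HA *; set B := bm_edist y z in B0 HB *.
set u1 := x.1 - y.1; set u2 := x.2 - y.2; set v1 := y.1 - z.1; set v2 := y.2 - z.2.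
have e : d2 x z = d2 x y + d2 y z + 2 * (u1 * v1 + u2 * v2) by rewrite /d2 /u1 /u2 /v1 /v2; ring.
have lag : (A * B) ^+ 2 - (u1 * v1 + u2 * v2) ^+ 2 = (u1 * v2 - u2 * v1) ^+ 2.
  by rewrite exprMn HA HB /d2 -/u1 -/u2 /v1 /v2 /u1 /u2; ring.
have AB0 : 0 <= A * B by rewrite mulr_ge0.
have : (u1 * v1 + u2 * v2) ^+ 2 <= (A * B) ^+ 2.
  by rewrite -subr_ge0 lag sqr_ge0.
rewrite e -HA -HB => H.
suff : u1 * v1 + u2 * v2 <= A * B by move=> ?; nra.
nra.
Qed.

Lemma occ_mono (eta : set (R * R)) (r1 r2 : R) (p : R * R) : r1 <= r2 ->
  bm_occupied eta r1 p -> bm_occupied eta r2 p.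
Proof.
move=> le [c ec hc]; exists c => //; rewrite /bm_cball /=.
exact: le_trans hc le.
Qed.

Lemma vac_mono (eta : set (R * R)) (r1 r2 : R) (p : R * R) : r1 <= r2 ->
  bm_vacant eta r2 p -> bm_vacant eta r1 p.
Proof. by move=> le hv ho; apply: hv; exact: occ_mono ho. Qed.

Lemma dist_vac_ge (eta : set (R * R)) (A : set (R * R)) e : 0 <= e ->
  A `<=` bm_vacant eta (1 + e) ->
  (e%:E <= bm_set_dist A (bm_occupied eta 1))%E.
Proof.
move=> e0 hA; apply: le_ereal_inf_tmp => _ [x [y [Ax [[c ec hc] ->]]]].
rewrite lee_fin; have hx := hA _ Ax.
have nc : ~ bm_edist c x <= 1 + e by move=> h; apply: hx; exists c.
have ht := edist_triangle c y x; rewrite /bm_cball /= in hc.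
move: nc => /negP; rewrite -ltNge => nc.
have := edistC x y; lra.
Qed.

Lemma vac_of_dist (eta : set (R * R)) (A : set (R * R)) e : 0 <= e ->
  A `<=` bm_vacant eta 1 ->
  (e%:E < bm_set_dist A (bm_occupied eta 1))%E ->
  A `<=` bm_vacant eta (1 + e).
Proof.
move=> e0 hA hd p Ap [c ec hc]; rewrite /bm_cball /= in hc.
have n1 : ~ bm_edist c p <= 1 by move=> h; apply: (hA _ Ap); exists c.
move: n1 => /negP; rewrite -ltNge => L1.
set L := bm_edist c p in L1 hc.
have L0 : L != 0 by rewrite gt_eqF // (lt_trans ltr01).
have HL : L ^+ 2 = d2 c p by exact: edist_sqr.
pose y : R * R := (c.1 + (p.1 - c.1) / L, c.2 + (p.2 - c.2) / L).
have dy : d2 c y = 1.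
  rewrite /d2 /y /=.
  have -> : (c.1 - (c.1 + (p.1 - c.1) / L)) ^+ 2 + (c.2 - (c.2 + (p.2 - c.2) / L)) ^+ 2
    = d2 c p / L ^+ 2 by rewrite /d2; field.
  by rewrite -HL divff // expf_neq0.
have dpy : d2 p y = (L - 1) ^+ 2.
  rewrite /d2 /y /=.
  have -> : (p.1 - (c.1 + (p.1 - c.1) / L)) ^+ 2 + (p.2 - (c.2 + (p.2 - c.2) / L)) ^+ 2
    = d2 c p * (1 - L^-1) ^+ 2 by rewrite /d2; field.
  by rewrite -HL; field.
have Oy : bm_occupied eta 1 y.
  by exists c => //; rewrite /bm_cball /= /bm_edist -/(d2 c y) dy sqrtr1.
have : (bm_set_dist A (bm_occupied eta 1) <= (bm_edist p y)%:E)%E.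
  rewrite /bm_set_dist; apply: ereal_inf_lbound.
  by exists p; exists y.
have eL : bm_edist p y = L - 1.
  by rewrite /bm_edist -/(d2 p y) dpy sqrtr_sqr ger0_norm // subr_ge0 ltW.
rewrite eL => h.
have := lt_le_trans hd h; rewrite lte_fin => h2.
lra.
Qed.


Lemma ereal_between (m : R) (d : \bar R) : (m%:E < d)%E ->
  exists e : R, m < e /\ (e%:E < d)%E.
Proof.
case: d => [d'| |] //=.
- rewrite lte_fin => h; exists ((m + d') / 2); split; rewrite ?lte_fin; lra.
- by move=> _; exists (m + 1); split; rewrite ?ltey //; lra.
Qed.

Lemma part1 (eta : set (R * R)) (N : R) :
  bm_sup0 [set d | exists g, bm_crossing_path N N g /\
     (forall t, bm_I01 t -> bm_vacant eta 1 (g t)) /\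
     d = bm_set_dist (g @` (@bm_I01 R)) (bm_occupied eta 1)]
  = bm_sup0 [set d | exists e : R, (0 <= e)%R /\
        bm_cross_star (bm_vacant eta (1 + e)%R) N /\ d = e%:E].
Proof.
set SL := [set d | _]; set SR := [set d | _].
have LR : SL !=set0 -> SR !=set0.
  case=> _ [g [cg [vg _]]]; exists 0%:E; exists 0; split => //; split => //.
  by exists g; split => // t /vg; rewrite addr0.
have RL : SR !=set0 -> SL !=set0.
  case=> _ [e [e0 [[g [cg vg]] _]]].
  exists (bm_set_dist (g @` (@bm_I01 R)) (bm_occupied eta 1)); exists g; split => //.
  split => // t /vg; apply: vac_mono; lra.
rewrite /bm_sup0.
have [SL0|SLn] := pselect (SL = set0).
  have SR0 : SR = set0.
    apply/eqP; apply/negPn/negP => /set0P/RL/set0P/eqP; exact.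
  by rewrite SL0 SR0 asboolT.
have SRn : SR != set0 by apply/set0P/LR/set0P/eqP.
rewrite asboolF //; rewrite asboolF; last by apply/eqP.
apply/eqP; rewrite eq_le; apply/andP; split.
- apply: ge_ereal_sup => _ [g [cg [vg ->]]].
  have SR0 : SR 0%:E.
    by exists 0; split => //; split => //; exists g; split => // t /vg; rewrite addr0.
  have M0 : (0%:E <= ereal_sup SR)%E by apply: ereal_sup_ubound.
  rewrite leNgt; apply/negP => hlt.
  have Mfin : ereal_sup SR \is a fin_num.
    by rewrite ge0_fin_numE // (lt_le_trans hlt) // leey.
  move: hlt; rewrite -(fineK Mfin) => /ereal_between [e [me ed]].
  have e0 : 0 <= e.
    by move: M0; rewrite -(fineK Mfin) lee_fin => h; apply: le_trans (ltW me).
  have : SR e%:E.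
    exists e; split => //; split => //; exists g; split => //.
    have hA : (g @` (@bm_I01 R)) `<=` bm_vacant eta 1.
      by move=> _ [u Iu <-]; apply: vg.
    have := vac_of_dist _ _ _ e0 hA ed => H t It.
    by apply: H; exists t.
  move/ereal_sup_ubound; rewrite -(fineK Mfin) lee_fin => h.
  by move: (lt_le_trans me h); rewrite ltxx.
- apply: ge_ereal_sup => _ [e [e0 [[g [cg vg]] ->]]].
  apply: (le_trans _ (ereal_sup_ubound _)); last first.
    exists g; split => //; split => //.
    by move=> t /vg; apply: vac_mono; lra.
  by apply: dist_vac_ge => // _ [t It <-]; apply: vg.
Qed.


Lemma cont_nbhs_lt (f : R -> R) x c : {for x, continuous f} -> f x < c ->
  exists2 eps : R, 0 < eps & forall y, `|y - x| < eps -> f y < c.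
Proof.
move=> cf fx; have := cf; move/cvgrPdist_lt => /(_ (c - f x)).
rewrite subr_gt0 => /(_ fx) /nbhs_ballP [eps eps0 H].
exists eps => // y hy; have := H y.
rewrite /ball /= distrC => /(_ hy) h.
move: h; rewrite ltr_norml => /andP [h1 h2]; lra.
Qed.

Lemma cont_nbhs_gt (f : R -> R) x c : {for x, continuous f} -> c < f x ->
  exists2 eps : R, 0 < eps & forall y, `|y - x| < eps -> c < f y.
Proof.
move=> cf fx.
have cf' : {for x, continuous (fun y => - f y)} by apply: continuousN.
have [eps e0 H] := @cont_nbhs_lt (fun y => - f y) x (- c) cf' ltac:(rewrite ltrN2 //).
by exists eps => // y /H; rewrite ltrN2.
Qed.

Lemma first_hit (f : R -> R) a b c : (forall x, {for x, continuous f}) ->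
  a <= b -> f a < c -> c <= f b ->
  exists t, [/\ a <= t, t <= b, f t = c & forall u, a <= u -> u < t -> f u < c].
Proof.
move=> cf ab fa fb.
pose S := [set u | a <= u /\ u <= b /\ c <= f u].
have Sb : S b by rewrite /S /=; split => //; split.
have lbS : lbound S a by move=> u [].
have hlS : has_lbound S by exists a.
have hiS : has_inf S by split => //; exists b.
have at_ : a <= inf S by apply: lb_le_inf => //; exists b.
have tb : inf S <= b by apply: ge_inf.
have below : forall u, a <= u -> u < inf S -> f u < c.
  move=> u au ut; rewrite ltNge; apply/negP => cu.
  have : inf S <= u by apply: ge_inf => //; split => //; split => //; lra.
  lra.
exists (inf S); split => //.
have [ft|ft|//] := ltgtP (f (inf S)) c.
- have [eps e0 H] := @cont_nbhs_lt f (inf S) c (cf _) ft.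
  have [v Sv hv] := inf_adherent e0 hiS.
  have tv : inf S <= v by apply: ge_inf.
  have : f v < c by apply: H; rewrite ger0_norm; lra.
  by case: Sv => _ [_ ?]; lra.
- have [eps e0 H] := @cont_nbhs_gt f (inf S) c (cf _) ft.
  have ta : a < inf S.
    rewrite lt_def at_ andbT; apply/eqP => e; move: ft; rewrite e; lra.
  pose v := Num.max a (inf S - eps / 2).
  have av : a <= v by rewrite le_max lexx.
  have vt : v < inf S by rewrite gt_max ta /=; lra.
  have : c < f v.
    apply: H; rewrite ltr0_norm ?subr_lt0 //.
    have : inf S - eps / 2 <= v by rewrite le_max lexx orbT.
    lra.
  have := below v av vt; lra.
Qed.

Lemma clip (X : R -> R) m : (forall x, {for x, continuous X}) -> 0 < m ->
  X 0 <= - m -> m <= X 1 ->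
  exists t1 t2, [/\ 0 <= t1, t1 <= t2, t2 <= 1, X t1 = - m & X t2 = m] /\
    forall v, t1 <= v -> v <= t2 -> - m <= X v <= m.
Proof.
move=> cX m0 X0 X1.
have [t2 [t20 t21 Xt2 below]] := @first_hit X 0 1 m cX ler01 ltac:(lra) X1.
pose Y u := - X (t2 - u).
have cY : forall x, {for x, continuous Y}.
  move=> x; apply: continuousN; apply: continuous_comp; last exact: cX.
  by apply: continuousB; [exact: cvg_cst | exact: cvg_id].
have [t [t0 tt2 Yt belowY]] := @first_hit Y 0 t2 m cY t20
   ltac:(rewrite /Y subr0; lra) ltac:(rewrite /Y subrr; lra).
exists (t2 - t), t2; split; first split => //; try lra.
- by move: Yt; rewrite /Y; lra.
- move=> v h1 h2; apply/andP; split.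
  + have [ut|ut] := ltP (t2 - v) t.
    * have := belowY (t2 - v) ltac:(lra) ut; rewrite /Y opprB addrC subrK; lra.
    * have -> : v = t2 - t by lra.
      by move: Yt; rewrite /Y; lra.
  + have [vt|vt] := ltP v t2.
    * by apply/ltW/below => //; lra.
    * have -> : v = t2 by lra.
      by rewrite Xt2.
Qed.

Definition clamp01 (t : R) : R := Num.min 1 (Num.max 0 t).

Lemma clamp01_I (t : R) : bm_I01 (clamp01 t).
Proof.
rewrite /bm_I01 /clamp01 /=; apply/andP; split.
  by rewrite le_min ler01 le_max lexx.
by rewrite ge_min lexx.
Qed.

Lemma clamp01_id (t : R) : bm_I01 t -> clamp01 t = t.
Proof.
rewrite /bm_I01 /clamp01 /= => /andP [t0 t1].
by rewrite (max_r t0) (min_r t1).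
Qed.

Lemma clamp01_cont : forall x, {for x, continuous clamp01}.
Proof.
move=> x; rewrite /clamp01.
have h1 := @continuous_max R R (cst 0) id x ltac:(exact: cvg_cst) ltac:(exact: cvg_id).
have h2 := @continuous_min R R (cst 1) (cst 0 \max id) x ltac:(exact: cvg_cst) h1.
exact: h2.
Qed.

Lemma glob_cont (T : topologicalType) (g : R -> T) :
  {within (@bm_I01 R), continuous g} -> forall x, {for x, continuous (g \o clamp01)}.
Proof.
move=> /subspace_continuousP gc x.
have H : clamp01 @ nbhs x --> within (@bm_I01 R) (nbhs (clamp01 x)).
  move=> P /= hP.
  have h : nbhs x (fun t => bm_I01 (clamp01 t) -> P (clamp01 t)) := clamp01_cont x _ hP.
  change (nbhs x (fun t => P (clamp01 t))).
  by apply: filterS h => t; apply; apply: clamp01_I.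
exact: (cvg_comp _ _ H (gc _ (clamp01_I x))).
Qed.


Section Avg.
Variable s : seq (R * R).
Variable w : R * R -> R.
Let S0 := \sum_(c <- s) w c.
Let S1 := \sum_(c <- s) w c * c.1.
Let S2 := \sum_(c <- s) w c * c.2.
Let S3 := \sum_(c <- s) w c * (c.1 ^+ 2 + c.2 ^+ 2).
Let A z := \sum_(c <- s) w c * d2 z c.

Lemma A_expand z : A z = S0 * (z.1 ^+ 2 + z.2 ^+ 2) - 2 * z.1 * S1 - 2 * z.2 * S2 + S3.
Proof.
rewrite /A /S0 /S1 /S2 /S3; elim: s => [|c t IH]; first by rewrite !big_nil; ring.
by rewrite !big_cons IH /d2; ring.
Qed.

Lemma sum_ge_seq (f g : R * R -> R) : (forall c, c \in s -> f c <= g c) ->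
  \sum_(c <- s) f c <= \sum_(c <- s) g c.
Proof.
move=> h; rewrite big_seq [X in _ <= X]big_seq; apply: ler_sum => c; exact: h.
Qed.

Hypothesis w0 : forall c, c \in s -> 0 <= w c.

Lemma S0_gt0 c : c \in s -> 0 < w c -> 0 < S0.
Proof.
rewrite /S0; elim: s w0 => [|d t IH] hw; first by rewrite in_nil.
rewrite big_cons inE => /orP [/eqP ->| ct] wc.
- have hs : 0 <= \sum_(c <- t) w c.
    by rewrite big_seq; apply: sumr_ge0 => i it; apply: hw; rewrite inE it orbT.
  lra.
- have hd : 0 <= w d by apply: hw; rewrite inE eqxx.
  have hw' : forall c, c \in t -> 0 <= w c.
    by move=> c' ct'; apply: hw; rewrite inE ct' orbT.
  have := IH hw' ct wc; lra.
Qed.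

Lemma avg_bounds (f : R * R -> R) lo hi : 0 < S0 ->
  (forall c, c \in s -> 0 < w c -> lo <= f c <= hi) ->
  lo <= (\sum_(c <- s) w c * f c) / S0 <= hi.
Proof.
move=> S0p h.
have h1 : \sum_(c <- s) w c * lo <= \sum_(c <- s) w c * f c.
  apply: sum_ge_seq => c cs; have := w0 _ cs; rewrite le_eqVlt => /orP [/eqP <-|wp].
    by rewrite !mul0r.
  by rewrite ler_pM2l //; case/andP: (h c cs wp).
have h2 : \sum_(c <- s) w c * f c <= \sum_(c <- s) w c * hi.
  apply: sum_ge_seq => c cs; have := w0 _ cs; rewrite le_eqVlt => /orP [/eqP <-|wp].
    by rewrite !mul0r.
  by rewrite ler_pM2l //; case/andP: (h c cs wp).
rewrite -!mulr_suml -/S0 in h1 h2.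
by rewrite ler_pdivlMr // ler_pdivrMr // mulrC h1 mulrC h2.
Qed.

Lemma avg_clear p (rho : R) : 0 < S0 ->
  (forall c, c \in s -> 0 < w c -> d2 p c <= rho ^+ 2) ->
  forall z, d2 z (S1 / S0, S2 / S0) < d2 p (S1 / S0, S2 / S0) + 1 - rho ^+ 2 ->
  exists2 c, c \in s & d2 z c < 1.
Proof.
move=> S0p hp z hz.
have S0n : S0 != 0 by rewrite gt_eqF.
have key : A z - A p = S0 * (d2 z (S1 / S0, S2 / S0) - d2 p (S1 / S0, S2 / S0)).
  by rewrite !A_expand /d2 /=; field.
have Ap : A p <= S0 * rho ^+ 2.
  rewrite /A /S0 mulr_suml; apply: sum_ge_seq => c cs.
  have := w0 _ cs; rewrite le_eqVlt => /orP [/eqP <-|wp]; first by rewrite !mul0r.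
  by rewrite ler_pM2l // hp.
have Az : A z < S0.
  have : S0 * (d2 z (S1 / S0, S2 / S0) - d2 p (S1 / S0, S2 / S0)) < S0 * (1 - rho ^+ 2).
    by rewrite ltr_pM2l //; lra.
  lra.
case: (pselect (exists2 c, c \in s & d2 z c < 1)) => // hn; exfalso.
suff : S0 <= A z by lra.
rewrite /S0 /A; apply: sum_ge_seq => c cs.
have : 1 <= d2 z c by rewrite leNgt; apply/negP => hc; apply: hn; exists c.
by move=> h1; rewrite -{1}(mulr1 (w c)); exact: (ler_wpM2l (w0 _ cs) h1).
Qed.
End Avg.


Lemma cont_fst (G : R -> R * R) (x : R) : {for x, continuous G} ->
  {for x, continuous (fun t => (G t).1)}.
Proof. by move=> cG; apply: (@continuous_comp _ _ _ G fst x cG); exact: cvg_fst. Qed.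

Lemma cont_snd (G : R -> R * R) (x : R) : {for x, continuous G} ->
  {for x, continuous (fun t => (G t).2)}.
Proof. by move=> cG; apply: (@continuous_comp _ _ _ G snd x cG); exact: cvg_snd. Qed.

Lemma cont_pair (f g : R -> R) (x : R) : {for x, continuous f} ->
  {for x, continuous g} -> {for x, continuous (fun t => (f t, g t))}.
Proof. by move=> cf cg; exact: (@cvg_pair _ _ _ (nbhs x) (nbhs (f x)) (nbhs (g x)) _ _ _ _ _ cf cg). Qed.

Lemma cont_sum (T : Type) (s : seq T) (F : T -> R -> R) (x : R) :
  (forall c, {for x, continuous (F c)}) ->
  {for x, continuous (fun t => \sum_(c <- s) F c t)}.
Proof.
move=> cF; elim: s => [|c s IH].
  have -> : (fun t => \sum_(c <- [::]) F c t) = (fun _ => 0).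
    by apply/funext => t; rewrite big_nil.
  exact: cvg_cst.
have -> : (fun t => \sum_(c0 <- c :: s) F c0 t) = (fun t => F c t + \sum_(c0 <- s) F c0 t).
  by apply/funext => t; rewrite big_cons.
exact: (continuousD (cF c) IH).
Qed.

Lemma cont_edist (G : R -> R * R) (c : R * R) (x : R) : {for x, continuous G} ->
  {for x, continuous (fun t => bm_edist c (G t))}.
Proof.
move=> cG; rewrite /bm_edist.
have c1 := cont_fst _ _ cG; have c2 := cont_snd _ _ cG.
have hf : {for x, continuous (fun t => (c.1 - (G t).1) ^+ 2 + (c.2 - (G t).2) ^+ 2)}.
  have -> : (fun t => (c.1 - (G t).1) ^+ 2 + (c.2 - (G t).2) ^+ 2) =
     (fun t => (c.1 - (G t).1) * (c.1 - (G t).1) + (c.2 - (G t).2) * (c.2 - (G t).2)).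
    by apply/funext => t; rewrite !expr2.
  have d1 : {for x, continuous (fun t => c.1 - (G t).1)}.
    by apply: continuousB; [exact: cvg_cst | exact: c1].
  have d2 : {for x, continuous (fun t => c.2 - (G t).2)}.
    by apply: continuousB; [exact: cvg_cst | exact: c2].
  exact: (continuousD (continuousM d1 d1) (continuousM d2 d2)).
exact: (continuous_comp hf (@sqrt_continuous R _)).
Qed.


Lemma alg_shift (X Y T D sg : R) : 0 <= sg -> X ^+ 2 + Y ^+ 2 < sg ^+ 2 ->
  T ^+ 2 + 2 * `|T| * sg <= D -> (X + T) ^+ 2 + Y ^+ 2 < D + sg ^+ 2.
Proof.
move=> sg0 hXY hT.
have hX : `|X| <= sg.
  rewrite leNgt; apply/negP => hlt.
  have : sg ^+ 2 < `|X| ^+ 2 by rewrite ltr_pXn2r // ?nnegrE ?normr_ge0.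
  rewrite real_normK ?num_real //; move=> h; have := sqr_ge0 Y; lra.
have hXT : X * T <= `|T| * sg.
  apply: (le_trans (ler_norm _)); rewrite normrM mulrC.
  by apply: ler_wpM2l => //; rewrite normr_ge0.
have e : (X + T) ^+ 2 + Y ^+ 2 = X ^+ 2 + Y ^+ 2 + 2 * (X * T) + T ^+ 2 by ring.
rewrite e; lra.
Qed.

Lemma sq_le_d2 (p q : R * R) : (q.1 - p.1) ^+ 2 <= d2 p q.
Proof. rewrite /d2 -(sqrrN (p.1 - q.1)) opprB lerDl; exact: sqr_ge0. Qed.

Lemma d2_comp1 (p c : R * R) r : 0 <= r -> d2 p c <= r ^+ 2 -> `|c.1 - p.1| <= r.
Proof.
move=> r0 h; rewrite -(ger0_norm r0) -ler_sqr ?nnegrE ?normr_ge0 //.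
rewrite real_normK ?num_real // real_normK ?num_real //.
apply: le_trans h; rewrite /d2 -(sqrrN (p.1 - c.1)) opprB lerDl; exact: sqr_ge0.
Qed.

Lemma d2_comp2 (p c : R * R) r : 0 <= r -> d2 p c <= r ^+ 2 -> `|c.2 - p.2| <= r.
Proof.
move=> r0 h; rewrite -(ger0_norm r0) -ler_sqr ?nnegrE ?normr_ge0 //.
rewrite real_normK ?num_real // real_normK ?num_real //.
apply: le_trans h; rewrite /d2 -(sqrrN (p.2 - c.2)) opprB lerDr; exact: sqr_ge0.
Qed.


Lemma I01_0 : bm_I01 (0 : R).
Proof. by rewrite /bm_I01 /= lexx ler01. Qed.

Lemma I01_1 : bm_I01 (1 : R).
Proof. by rewrite /bm_I01 /= lexx ler01. Qed.

Lemma max0_l (x : R) : x <= 0 -> Num.max 0 x = 0.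
Proof. by move=> h; rewrite max_l. Qed.

Lemma max0_r (x : R) : 0 <= x -> Num.max 0 x = x.
Proof. by move=> h; rewrite max_r. Qed.

Lemma clamp01_0 (x : R) : x <= 0 -> clamp01 x = 0.
Proof. by move=> h; rewrite /clamp01 max0_l // min_r // ler01. Qed.

Lemma clamp01_1 (x : R) : 1 <= x -> clamp01 x = 1.
Proof. by move=> h; rewrite /clamp01 max0_r ?min_l //; lra. Qed.

Lemma shift_bound (A L s_ sg D : R) : 0 <= sg -> sg <= s_ -> 0 <= L ->
  L <= Num.max 0 A -> (A + s_) ^+ 2 <= D -> L ^+ 2 + 2 * `|L| * sg <= D.
Proof.
move=> sg0 sgs L0 LA hD; rewrite ger0_norm //.
have [A0|A0] := leP A 0.
  rewrite max0_l // in LA; have -> : L = 0 by lra.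
  by rewrite expr0n /= mulr0 mul0r add0r (le_trans _ hD) // sqr_ge0.
rewrite max0_r in LA; last by lra.
apply: le_trans hD.
have h1 : L + sg <= A + s_ by lra.
have : (L + sg) ^+ 2 <= (A + s_) ^+ 2 by rewrite ler_pXn2r ?nnegrE //; lra.
have : L ^+ 2 + 2 * L * sg <= (L + sg) ^+ 2.
  have -> : (L + sg) ^+ 2 = L ^+ 2 + 2 * L * sg + sg ^+ 2 by ring.
  by rewrite lerDl sqr_ge0.
lra.
Qed.

Lemma part2_core (eta : set (R * R)) (N r r' : R) (g : R -> R * R) :
  bm_locally_finite eta -> 0 <= r -> r < r' -> r' < 1 ->
  bm_crossing_path (N + Num.sqrt (1 - r ^+ 2)) (N - 1) g ->
  (forall t, bm_I01 t -> bm_occupied eta r (g t)) ->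
  exists G, bm_crossing_path N N G /\ (forall t, bm_I01 t -> bm_occupied eta 1 (G t)) /\
    ((Num.sqrt (1 - r' ^+ 2))%:E <= bm_set_dist (G @` (@bm_I01 R)) (bm_vacant eta 1))%E.
Proof.
move=> lf r0 rr' r'1 [gc [grect [g0 g1]]] gocc.
set s_ := Num.sqrt (1 - r ^+ 2).
set a := N + s_.
set h := N - 1.
have ea : a = N + s_ by [].
have eh : h = N - 1 by [].
set sg := Num.sqrt (1 - r' ^+ 2).
have r'0 : 0 <= r' by lra.
have r'2 : r' ^+ 2 < 1 by rewrite -(expr1n _ 2) ltr_pXn2r ?nnegrE //; lra.
have sg2 : sg ^+ 2 = 1 - r' ^+ 2 by rewrite sqr_sqrtr //; lra.
have sg0 : 0 < sg by rewrite sqrtr_gt0; lra.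
have s_0 : 0 <= s_ by apply: sqrtr_ge0.
have sgs : sg <= s_.
  rewrite ler_sqrt; last by rewrite subr_ge0 -(expr1n _ 2) ler_pXn2r ?nnegrE //; lra.
  by rewrite lerD2l lerN2 ler_pXn2r ?nnegrE //; lra.
have h0 : 0 <= h.
  have := grect 0 I01_0; rewrite /bm_rect /= => -[_ /andP [h1 h2]]; rewrite eh; lra.
have N1 : 1 <= N by lra.
pose gh := g \o clamp01.
have ghc : forall x, {for x, continuous gh} := glob_cont _ _ gc.
have ghr : forall t, bm_rect a h (gh t) by move=> t; apply: grect; apply: clamp01_I.
have gho : forall t, bm_occupied eta r (gh t) by move=> t; apply: gocc; apply: clamp01_I.
have gh0 : gh 0 = g 0 by rewrite /gh /= clamp01_id //; exact: I01_0.
have gh1 : gh 1 = g 1 by rewrite /gh /= clamp01_id //; exact: I01_1.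
have [sq Esq] := (finite_seqP _).1 (lf (a + h + 2)).
pose w (c p : R * R) := Num.max 0 (r' - bm_edist c p).
have w0 : forall c p, 0 <= w c p by move=> c p; rewrite /w le_max lexx.
have wpos : forall c p, 0 < w c p -> d2 p c <= r' ^+ 2.
  move=> c p; rewrite /w lt_max ltxx /= subr_gt0 => hlt.
  by rewrite d2C -edist_le //; apply: ltW.
have inE_ : forall c, c \in sq -> eta c.
  by move=> c cs; have : [set` sq] c by []; rewrite -Esq => -[].
have cover : forall t, exists2 c, c \in sq & 0 < w c (gh t).
  move=> t; have [c ec hc] := gho t; rewrite /bm_cball /= in hc.
  exists c; last by rewrite /w lt_max ltxx /= subr_gt0; lra.
  have : [set` sq] c; last by [].
  rewrite -Esq; split => //.
  have := ghr t; rewrite /bm_rect /= => -[/andP [x1 x2] /andP [y1 y2]].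
  have hc2 : d2 (gh t) c <= r ^+ 2 by rewrite d2C -edist_le.
  have c1 := d2_comp1 _ _ _ r0 hc2; have c2 := d2_comp2 _ _ _ r0 hc2.
  rewrite edist_le; last by lra.
  rewrite /d2 /= !sub0r !sqrrN.
  move: c1 c2; rewrite !ler_norml => /andP [c1 c1'] /andP [c2 c2'].
  nra.
pose S0 t := \sum_(c <- sq) w c (gh t).
pose S1 t := \sum_(c <- sq) w c (gh t) * c.1.
pose S2 t := \sum_(c <- sq) w c (gh t) * c.2.
have w0' : forall t c, c \in sq -> 0 <= w c (gh t) by move=> t c _; apply: w0.
have S0p : forall t, 0 < S0 t.
  move=> t; have [c cs wct] := cover t.
  have H := @S0_gt0 sq (fun c => w c (gh t)) (w0' t) c cs wct.
  exact: H.
pose q t := (S1 t / S0 t, S2 t / S0 t).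
have wc : forall c x, {for x, continuous (fun t => w c (gh t))}.
  move=> c x; rewrite /w.
  have h1 : {for x, continuous (fun t => r' - bm_edist c (gh t))}.
    by apply: continuousB; [exact: cvg_cst | exact: cont_edist].
  exact: (@continuous_max R R (cst 0) _ x ltac:(exact: cvg_cst) h1).
have S0c : forall x, {for x, continuous S0}.
  by move=> x; exact: (@cont_sum _ sq (fun c t => w c (gh t)) x (fun c => wc c x)).
have S1c : forall x, {for x, continuous S1}.
  move=> x; apply: (@cont_sum _ sq (fun c t => w c (gh t) * c.1) x) => c.
  exact: (@continuousM R R (fun t => w c (gh t)) (fun _ => c.1) x (wc c x) (cvg_cst _)).
have S2c : forall x, {for x, continuous S2}.
  move=> x; apply: (@cont_sum _ sq (fun c t => w c (gh t) * c.2) x) => c.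
  exact: (@continuousM R R (fun t => w c (gh t)) (fun _ => c.2) x (wc c x) (cvg_cst _)).
have S0Vc : forall x, {for x, continuous (fun t => (S0 t)^-1)}.
  by move=> x; exact: (@continuousV R R S0 x ltac:(by rewrite gt_eqF // S0p) (S0c x)).
have qc : forall x, {for x, continuous q}.
  move=> x; apply: cont_pair.
  - exact: (@continuousM R R S1 (fun t => (S0 t)^-1) x (S1c x) (S0Vc x)).
  - exact: (@continuousM R R S2 (fun t => (S0 t)^-1) x (S2c x) (S0Vc x)).
have qb2 : forall t, - N <= (q t).2 <= N.
  move=> t.
  have H := @avg_bounds sq (fun c => w c (gh t)) (w0' t) snd ((gh t).2 - r') ((gh t).2 + r') (S0p t).
  have := ghr t; rewrite /bm_rect => -[_ /andP [y1 y2]].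
  have : (gh t).2 - r' <= (q t).2 <= (gh t).2 + r'.
    apply: H => c cs wp; have := d2_comp2 _ _ _ r'0 (wpos _ _ wp).
    by rewrite ler_norml => /andP [h1 h2]; apply/andP; split; lra.
  by move=> /andP [h1 h2]; apply/andP; split; lra.
have qclear : forall t z, d2 z (q t) < d2 (gh t) (q t) + sg ^+ 2 -> bm_occupied eta 1 z.
  move=> t z hz.
  have [c cs hc] := @avg_clear sq (fun c => w c (gh t)) (w0' t) (gh t) r' (S0p t)
     (fun c _ wp => wpos _ _ wp) z ltac:(rewrite sg2 in hz; rewrite /q in hz; lra).
  exists c; first exact: inE_.
  by rewrite /bm_cball /= edist_le // d2C expr1n ltW.
pose tau t := clamp01 (3 * t + -1).
pose u0 := Num.max 0 ((q 0).1 + N).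
pose u1 := Num.max 0 (N - (q 1).1).
pose Lf t := Num.max 0 (-3 * t + 1) * u0.
pose Mf t := Num.max 0 (3 * t + -2) * u1.
pose Q t := ((q (tau t)).1 - Lf t + Mf t, (q (tau t)).2).
have affc : forall (k b : R) x, {for x, continuous (fun t : R => k * t + b)}.
  move=> k b x; apply: continuousD; last exact: cvg_cst.
  by apply: continuousM; [exact: cvg_cst | exact: cvg_id].
have tauc : forall x, {for x, continuous tau}.
  move=> x; have := affc 3 (-1) x => h1.
  exact: (continuous_comp h1 (clamp01_cont _)).
have qtc : forall x, {for x, continuous (q \o tau)}.
  by move=> x; exact: (continuous_comp (tauc x) (qc _)).
have Lc : forall x, {for x, continuous Lf}.
  move=> x; apply: continuousM; last exact: cvg_cst.
  exact: (@continuous_max R R (cst 0) _ x ltac:(exact: cvg_cst) (affc (-3) 1 x)).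
have Mc : forall x, {for x, continuous Mf}.
  move=> x; apply: continuousM; last exact: cvg_cst.
  exact: (@continuous_max R R (cst 0) _ x ltac:(exact: cvg_cst) (affc 3 (-2) x)).
have Xc : forall x, {for x, continuous (fun t => (Q t).1)}.
  move=> x; apply: continuousD; last exact: Mc.
  apply: continuousB; last exact: Lc.
  exact: (cont_fst _ _ (qtc x)).
have Qc : forall x, {for x, continuous Q}.
  move=> x; apply: cont_pair; first exact: Xc.
  exact: (cont_snd _ _ (qtc x)).
have u00 : 0 <= u0 by rewrite /u0 le_max lexx.
have u10 : 0 <= u1 by rewrite /u1 le_max lexx.
have Qclear : forall t z, 0 <= t <= 1 -> d2 z (Q t) < sg ^+ 2 -> bm_occupied eta 1 z.
  move=> t z /andP [t0 t1] hz; apply: (qclear (tau t)).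
  set qq := q (tau t); set p := gh (tau t).
  have eQ1 : (Q t).1 = qq.1 - Lf t + Mf t by [].
  have eQ2 : (Q t).2 = qq.2 by [].
  have e : d2 z qq = (z.1 - (Q t).1 + (Mf t - Lf t)) ^+ 2 + (z.2 - (Q t).2) ^+ 2.
    by rewrite /d2 eQ1 eQ2; congr (_ ^+ 2 + _); ring.
  rewrite e; apply: alg_shift; first exact: ltW.
    by move: hz; rewrite /d2.
  have hD := sq_le_d2 p qq.
  have [t13|t13] := leP t (3^-1).
  - have Mz : Mf t = 0 by rewrite /Mf max0_l ?mul0r //; lra.
    have tz : tau t = 0 by rewrite /tau clamp01_0 //; lra.
    have pe : p.1 = - (N + s_) by rewrite /p tz gh0 g0.
    rewrite Mz sub0r normrN sqrrN.
    apply: (@shift_bound (qq.1 + N) _ s_ sg) => //; first exact: ltW.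
    + by rewrite /Lf mulr_ge0 // le_max lexx.
    + rewrite /Lf /u0 /qq tz; set m := Num.max 0 ((q 0).1 + N).
      have m0 : 0 <= m by rewrite /m le_max lexx.
      rewrite max0_r; last by lra.
      have : (-3 * t + 1) * m <= 1 * m by apply: ler_wpM2r => //; lra.
      by rewrite mul1r.
    + by apply: le_trans hD; rewrite pe le_eqVlt; apply/orP; left; apply/eqP; ring.
  - have Lz : Lf t = 0 by rewrite /Lf max0_l ?mul0r //; lra.
    have [t23|t23] := leP t (2 / 3).
    + have Mz : Mf t = 0 by rewrite /Mf max0_l ?mul0r //; lra.
      rewrite Mz Lz subrr expr0n /= normr0 mulr0 mul0r addr0.
      exact: d2_ge0.
    + have tz : tau t = 1 by rewrite /tau clamp01_1 //; lra.
      have pe : p.1 = N + s_ by rewrite /p tz gh1 g1.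
      rewrite Lz subr0.
      apply: (@shift_bound (N - qq.1) _ s_ sg) => //; first exact: ltW.
      * by rewrite /Mf mulr_ge0 // le_max lexx.
      * rewrite /Mf /u1 /qq tz; set m := Num.max 0 (N - (q 1).1).
        have m0 : 0 <= m by rewrite /m le_max lexx.
        rewrite max0_r; last by lra.
        have : (3 * t + -2) * m <= 1 * m by apply: ler_wpM2r => //; lra.
        by rewrite mul1r.
      * by apply: le_trans hD; rewrite pe le_eqVlt; apply/orP; left; apply/eqP; ring.
have tau0 : tau 0 = 0 by rewrite /tau mulr0 add0r clamp01_0 // lerN10.
have tau1 : tau 1 = 1.
  by rewrite /tau mulr1 clamp01_1 //; lra.
have L0 : Lf 0 = u0 by rewrite /Lf mulr0 add0r max0_r ?ler01 // mul1r.
have M0 : Mf 0 = 0 by rewrite /Mf mulr0 add0r max0_l ?mul0r // lerN10.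
have L1 : Lf 1 = 0.
  by rewrite /Lf mulr1 max0_l ?mul0r //; lra.
have M1 : Mf 1 = u1.
  rewrite /Mf; have -> : 3 * 1 + -2 = 1 :> R by lra.
  by rewrite max0_r ?ler01 // mul1r.
have X0 : (Q 0).1 <= - N.
  have -> : (Q 0).1 = (q (tau 0)).1 - Lf 0 + Mf 0 by [].
  rewrite tau0 L0 M0 addr0 /u0.
  have hm' : (q 0).1 + N <= Num.max 0 ((q 0).1 + N) by rewrite le_max lexx orbT.
  lra.
have X1 : N <= (Q 1).1.
  have -> : (Q 1).1 = (q (tau 1)).1 - Lf 1 + Mf 1 by [].
  rewrite tau1 L1 M1 subr0 /u1.
  have hm' : N - (q 1).1 <= Num.max 0 (N - (q 1).1) by rewrite le_max lexx orbT.
  lra.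
have N0 : 0 < N by lra.
have [t1 [t2 [[t10 t12 t21 Xt1 Xt2] Xin]]] := @clip (fun t => (Q t).1) N Xc N0 X0 X1.
pose G u := Q (t1 + u * (t2 - t1)).
have Gin : forall u, bm_I01 u -> t1 <= t1 + u * (t2 - t1) <= t2.
  move=> u /andP [uu0 uu1]; apply/andP; split.
    by rewrite lerDl mulr_ge0 // subr_ge0.
  have : u * (t2 - t1) <= 1 * (t2 - t1) by apply: ler_wpM2r => //; rewrite subr_ge0.
  rewrite mul1r; lra.
have Gclear : forall u z, bm_I01 u -> d2 z (G u) < sg ^+ 2 -> bm_occupied eta 1 z.
  move=> u z Iu hz; apply: (Qclear (t1 + u * (t2 - t1)) z _ hz).
  have /andP [h1 h2] := Gin u Iu; apply/andP; split; [exact: le_trans t10 h1 | exact: le_trans h2 t21].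
exists G; split; last split.
- split; last split; last split.
  + apply: continuous_subspaceT.
    have -> : G = Q \o (fun u => (t2 - t1) * u + t1).
      by apply/funext => u; rewrite /G /=; congr Q; ring.
    by move=> x; exact: (continuous_comp (affc _ _ x) (Qc _)).
  + move=> u Iu; have /andP [h1 h2] := Gin u Iu.
    have /andP [x1 x2] := Xin _ h1 h2.
    have /andP [y1 y2] := qb2 (tau (t1 + u * (t2 - t1))).
    by split; apply/andP; split.
  + by rewrite /G mul0r addr0.
  + by rewrite /G mul1r addrC subrK.
- move=> u Iu; apply: (Gclear u _ Iu).
  by rewrite /d2 !subrr expr0n /= addr0 exprn_gt0.
- apply: le_ereal_inf_tmp => _ [x [y [[u Iu <-] [Vy ->]]]].
  rewrite lee_fin leNgt; apply/negP => hlt.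
  apply: Vy; apply: (Gclear u _ Iu).
  by rewrite d2C -edist_lt //; apply: ltW.
Qed.


Lemma dist_ge0 (A B : set (R * R)) : (0%:E <= bm_set_dist A B)%E.
Proof. by apply: le_ereal_inf_tmp => _ [x [y [_ [_ ->]]]]; rewrite lee_fin edist_ge0. Qed.

Lemma part2 (eta : set (R * R)) (N : R) : bm_locally_finite eta ->
  ((Num.sqrt (1 - (bm_inf1 [set r : R | 0 <= r <= 1 /\
        bm_cross (bm_occupied eta r) (N + Num.sqrt (1 - r ^+ 2)) (N - 1)]) ^+ 2))%:E
   <= bm_sup0 [set d | exists g, bm_crossing_path N N g /\
     (forall t, bm_I01 t -> bm_occupied eta 1 (g t)) /\
     d = bm_set_dist (g @` (@bm_I01 R)) (bm_vacant eta 1)])%E.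
Proof.
move=> lf.
set A := [set r : R | _].
set S := [set d | _].
have W0 : (0%:E <= bm_sup0 S)%E.
  rewrite /bm_sup0; case: asboolP => // Sn.
  have [d Sd] : S !=set0 by apply/set0P/eqP.
  apply: le_trans (ereal_sup_ubound Sd).
  by case: Sd => g [_ [_ ->]]; apply: dist_ge0.
have key : forall r r', A r -> r < r' -> r' < 1 ->
    ((Num.sqrt (1 - r' ^+ 2))%:E <= bm_sup0 S)%E.
  move=> r r' [/andP [r0 r1] [g [cg og]]] rr' r'1.
  have [G [cG [oG dG]]] := @part2_core eta N r r' g lf r0 rr' r'1 cg og.
  have SG : S (bm_set_dist (G @` (@bm_I01 R)) (bm_vacant eta 1)) by exists G.
  rewrite /bm_sup0 asboolF; last by move=> S0; rewrite S0 in SG.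
  exact: le_trans dG (ereal_sup_ubound SG).
rewrite /bm_inf1; case: asboolP => [A0|An].
  by rewrite expr1n subrr sqrtr0.
have [r0 Ar0] : A !=set0 by apply/set0P/eqP.
have lbA : lbound A 0 by move=> r [/andP [h _] _].
have hinf : has_inf A by split; [exists r0 | exists 0].
set i := inf A.
have i0 : 0 <= i by apply: lb_le_inf => //; exists r0.
have i1 : i <= 1.
  apply: le_trans (ge_inf (ex_intro _ 0 lbA) Ar0) _.
  by case: Ar0 => /andP [].
move: W0; case E : (bm_sup0 S) => [w| |] W0; last 2 first.
- by rewrite leey.
- by [].

rewrite lee_fin in W0; rewrite lee_fin.
rewrite leNgt; apply/negP => hlt.
have w2 : w ^+ 2 < 1 - i ^+ 2.
  rewrite ltNge; apply/negP => hle.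
  have : Num.sqrt (1 - i ^+ 2) <= Num.sqrt (w ^+ 2) by rewrite ler_sqrt // sqr_ge0.
  rewrite sqrtr_sqr ger0_norm // => h; by have := lt_le_trans hlt h; rewrite ltxx.
set K := 1 - w ^+ 2.
have K1 : K <= 1 by rewrite /K lerBlDr lerDl sqr_ge0.
have iK : i ^+ 2 < K by rewrite /K; lra.
set k := Num.sqrt K.
have K0 : 0 < K by apply: le_lt_trans iK; exact: sqr_ge0.
have ik : i < k.
  by rewrite /k -(ger0_norm i0) -sqrtr_sqr ltr_sqrt.
have k1 : k <= 1 by rewrite /k -sqrtr1 ler_sqrt.
pose r' := (i + k) / 2.
have ir' : i < r' by rewrite /r'; lra.
have r'k : r' < k by rewrite /r'; lra.
have [r Ar rr'] := inf_adherent (ltac:(rewrite subr_gt0; exact: ir') : 0 < r' - i) hinf.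
have : r < r' by move: rr'; rewrite -/i addrC subrK.
move=> {}rr'.
have := key r r' Ar rr' ltac:(lra); rewrite E lee_fin => hw.
have r'0 : 0 <= r' by lra.
have : r' ^+ 2 < K.
  have : r' ^+ 2 < k ^+ 2 by rewrite ltr_pXn2r ?nnegrE //; lra.
  by rewrite /k sqr_sqrtr // ltW.
rewrite /K => hr.
have w20 := sqr_ge0 w.
have : w < Num.sqrt (1 - r' ^+ 2).
  by rewrite -(ger0_norm W0) -sqrtr_sqr ltr_sqrt //; lra.
move=> h; by have := lt_le_trans h hw; rewrite ltxx.
Qed.

End Geo.

Theorem lemma3p1 (R : realType) (lambda : R) (hlambda : 0 < lambda)
  (eta : set (R * R)) (heta : bm_locally_finite eta) (n : nat) :
  bm_w_vac eta n%:R =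
    (2%:E * bm_sup0 [set d | exists e : R, (0 <= e)%R /\
        bm_cross_star (bm_vacant eta (1 + e)%R) n%:R /\ d = e%:E])%E
  /\
  ((2 * Num.sqrt (1 - (bm_inf1 [set r : R | 0 <= r <= 1 /\
        bm_cross (bm_occupied eta r) (n%:R + Num.sqrt (1 - r ^+ 2)) (n%:R - 1)]) ^+ 2))%:E
     <= bm_w_occ eta n%:R)%E.
Proof.
split.
- by rewrite /bm_w_vac; congr (_ * _)%E; exact: part1.
- rewrite /bm_w_occ EFinM; apply: lee_wpmul2l; first by rewrite lee_fin.
  exact: part2.
Qed.
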